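(* Let $A=(V_\exists,V_\forall,E,E_f)$ be a fair game arena, $v\in V$, $s\in\Sigma$ and $t\in\Pi$. If $\mathsf{fair}_\forall(\mathsf{play}_v(s,t))$ holds, then there exists a $\forall$-fair strategy $\overline t\in\Pi^f$ with $\mathsf{play}_v(s,t)=\mathsf{play}_v(s,\overline t)$. Similarly, if $\mathsf{fair}_\exists(\mathsf{play}_v(s,t))$ holds, then there exists an $\exists$-fair strategy $\overline s\in\Sigma^f$ with $\mathsf{play}_v(s,t)=\mathsf{play}_v(\overline s,t)$.
   Context: A fair game arena $A=(V_\exists,V_\forall,E,E_f)$: finite node set $V=V_\exists\cup V_\forall$ (disjoint), right-total moves $E\subseteq V\times V$, fair moves $E_f\subseteq E$. A play is an infinite sequence $\tau=v_0v_1\ldots$ with $(v_j,v_{j+1})\in E$; $\tau_m=(v_0,v_1)(v_1,v_2)\ldots$; $\mathsf{Inf}$ denotes the set of elements occurring infinitely often. For $i\in\{\exists,\forall\}$, $\tau$ is $i$-fair ($\mathsf{fair}_i(\tau)$) if for all $u\in V_i\cap\mathsf{Inf}(\tau)$, every $(u,u')\in E_f$ is in $\mathsf{Inf}(\tau_m)$. A strategy for player $i$ is a function $p:V^*\cdot V_i\to V$ with $p(w\cdot u)\in E(u)$; it admits a play $v_0v_1\ldots$ if $p(v_0\ldots v_j)=v_{j+1}$ whenever $v_j\in V_i$. $\Sigma$ ($\Pi$) is the set of strategies of $\exists$ ($\forall$); $\mathsf{play}_v(s,t)$ is the unique play from $v$ admitted by both $s$ and $t$. A strategy is $i$-fair if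 every play it admits is $i$-fair; $\Sigma^f$ and $\Pi^f$ denote the sets of $\exists$-fair and $\forall$-fair strategies. *)

(* Defs.v *)
From Stdlib Require Import List Arith.
Import ListNotations.


(* A fair game arena over a node type V (finite: given by an exhaustive list).
   V_exists = nodes with [own v = true], V_forall = nodes with [own v = false]
   (so the two are disjoint and cover V). *)
Record arena := {
  V : Type;
  V_eq_dec : forall x y : V, {x = y} + {x <> y};
  V_enum : list V;
  V_enum_full : forall v : V, In v V_enum;
  own : V -> bool;
  E : V -> V -> Prop;
  E_total : forall u, exists u', E u u';
  Ef : V -> V -> Prop;
  Ef_sub : forall u u', Ef u u' -> E u u'
}.

Inductive player := Ex | All.

Definition owned (A : arena) (i : player) (u : V A) : Prop :=
  match i with Ex => own A u = true | All => own A u = false end.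

Definition is_play (A : arena) (tau : nat -> V A) : Prop :=
  forall j, E A (tau j) (tau (S j)).

Definition inf_node (A : arena) (tau : nat -> V A) (u : V A) : Prop :=
  forall n, exists j, n <= j /\ tau j = u.

Definition inf_move (A : arena) (tau : nat -> V A) (u u' : V A) : Prop :=
  forall n, exists j, n <= j /\ tau j = u /\ tau (S j) = u'.

Definition fair (A : arena) (i : player) (tau : nat -> V A) : Prop :=
  forall u, owned A i u -> inf_node A tau u ->
  forall u', Ef A u u' -> inf_move A tau u u'.

(* A strategy for player i: maps a history w·u (w the list of earlier nodes,
   in chronological order, u the current node) to a successor of u when
   u is an i-node.  Its values at non-i-nodes are irrelevant. *)
Definition strategy (A : arena) := list (V A) -> V A -> V A.

Definition valid_strategy (A : arena) (i : player) (p : strategy A) : Prop :=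
  forall w u, owned A i u -> E A u (p w u).

Definition prefix (A : arena) (tau : nat -> V A) (j : nat) : list (V A) :=
  map tau (seq 0 j).

Definition admits (A : arena) (i : player) (p : strategy A) (tau : nat -> V A) : Prop :=
  forall j, owned A i (tau j) -> p (prefix A tau j) (tau j) = tau (S j).

Fixpoint play_hist (A : arena) (v : V A) (s t : strategy A) (n : nat)
  : list (V A) * V A :=
  match n with
  | 0 => ([], v)
  | S n' =>
      let '(w, u) := play_hist A v s t n' in
      (w ++ [u], if own A u then s w u else t w u)
  end.

Definition play (A : arena) (v : V A) (s t : strategy A) : nat -> V A :=
  fun n => snd (play_hist A v s t n).

Definition fair_strategy (A : arena) (i : player) (p : strategy A) : Prop :=
  valid_strategy A i p /\
  forall tau, is_play A tau -> admits A i p tau -> fair A i tau.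

(* Main.v *)
Require Import Defs.
From Stdlib Require Import List Arith Lia Classical ClassicalEpsilon FunctionalExtensionality.
Import ListNotations.

Definition dflt (A : arena) (u : V A) : V A :=
  proj1_sig (constructive_indefinite_description _ (E_total A u)).

Lemma dflt_E A u : E A u (dflt A u).
Proof. unfold dflt. destruct constructive_indefinite_description; auto. Qed.

Definition cnt (A : arena) (u : V A) (w : list (V A)) : nat :=
  count_occ (V_eq_dec A) w u.

Definition rr (A : arena) (w : list (V A)) (u : V A) : V A :=
  let x := nth (cnt A u w mod length (V_enum A)) (V_enum A) u in
  if excluded_middle_informative (E A u x) then x else dflt A u.

Lemma rr_E A w u : E A u (rr A w u).
Proof.
  unfold rr. destruct excluded_middle_informative; auto. apply dflt_E.
Qed.

Definition mk (A : arena) (tau : nat -> V A) (p : strategy A) : strategy A :=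
  fun w u => if list_eq_dec (V_eq_dec A) (w ++ [u]) (prefix A tau (S (length w)))
             then p w u else rr A w u.

Lemma prefix_S A (tau : nat -> V A) j : prefix A tau (S j) = prefix A tau j ++ [tau j].
Proof. unfold prefix. rewrite seq_S, map_app. reflexivity. Qed.

Lemma prefix_len A (tau : nat -> V A) j : length (prefix A tau j) = j.
Proof. unfold prefix. rewrite length_map, length_seq. auto. Qed.

Lemma map_eq_in {X Y} (f g : X -> Y) l x : In x l -> map f l = map g l -> f x = g x.
Proof.
  induction l; simpl; intros H1 H2; [contradiction|].
  injection H2; intros. destruct H1; subst; auto.
Qed.

Lemma cnt_S A (tau : nat -> V A) u j :
  cnt A u (prefix A tau (S j)) =
  cnt A u (prefix A tau j) + (if V_eq_dec A (tau j) u then 1 else 0).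
Proof.
  unfold cnt. rewrite prefix_S, count_occ_app. simpl.
  destruct (V_eq_dec A (tau j) u); auto.
Qed.

Lemma cnt_mono A (tau : nat -> V A) u j k : j <= k ->
  cnt A u (prefix A tau j) <= cnt A u (prefix A tau k).
Proof.
  induction 1; auto. rewrite cnt_S. lia.
Qed.

Lemma cnt_unb A (tau : nat -> V A) u : inf_node A tau u ->
  forall K, exists j, K <= cnt A u (prefix A tau j).
Proof.
  intros Hi K. induction K.
  - exists 0; lia.
  - destruct IHK as [j Hj]. destruct (Hi j) as [j2 [Hj2 Ht]].
    exists (S j2). rewrite cnt_S. destruct V_eq_dec; [|contradiction].
    pose proof (cnt_mono A tau u j j2 Hj2). lia.
Qed.

Lemma cnt_hit A (tau : nat -> V A) u K : forall j,
  S K <= cnt A u (prefix A tau j) ->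
  exists j0, j0 < j /\ cnt A u (prefix A tau j0) = K /\ tau j0 = u.
Proof.
  induction j; intros H.
  - simpl in H. lia.
  - destruct (le_lt_dec (S K) (cnt A u (prefix A tau j))) as [H1|H1].
    + destruct (IHj H1) as [j0 [? ?]]. exists j0; split; [lia|auto].
    + rewrite cnt_S in H. destruct V_eq_dec; [|lia].
      exists j; split; [lia|split; [lia|auto]].
Qed.

Lemma mk_fair A (i : player) (tau : nat -> V A) (p : strategy A)
  (Hp : valid_strategy A i p) (Hf : fair A i tau) : fair_strategy A i (mk A tau p).
Proof.
  split.
  - intros w u Hu. unfold mk. destruct list_eq_dec; auto. apply rr_E.
  - intros tau' Hpl Had.
    destruct (classic (forall j, tau' j = tau j)) as [Heq|Hne].
    + assert (tau' = tau) by (apply functional_extensionality; auto). subst; auto.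
    + apply not_all_ex_not in Hne. destruct Hne as [k Hk].
      intros u Hu Hinf u' Hef n.
      assert (Hin : In u' (V_enum A)) by apply V_enum_full.
      destruct (In_nth (V_enum A) u' u Hin) as [i0 [Hi0 Hnth]].
      set (N := length (V_enum A)) in *.
      set (m := max n k).
      set (K := i0 + S (cnt A u (prefix A tau' m)) * N).
      destruct (cnt_unb A tau' u Hinf (S K)) as [j1 Hj1].
      destruct (cnt_hit A tau' u K j1 Hj1) as [j [_ [Hc Hu']]].
      assert (Hjm : m <= j).
      { destruct (le_lt_dec m j) as [?|Hlt]; auto.
        pose proof (cnt_mono A tau' u (S j) m Hlt). rewrite cnt_S in H.
        destruct V_eq_dec; [|contradiction]. unfold K in Hc. nia. }
      exists j. split; [lia|]. split; auto.
      pose proof (Had j) as Ha. rewrite Hu' in Ha. specialize (Ha Hu).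
      rewrite <- Ha. unfold mk. rewrite prefix_len.
      destruct list_eq_dec as [e|_].
      * exfalso. apply Hk. rewrite <- Hu' in e. rewrite <- prefix_S in e.
        unfold prefix in e. apply (map_eq_in _ _ (seq 0 (S j))); auto.
        apply in_seq. lia.
      * unfold rr. rewrite Hc. unfold K. fold N.
        rewrite Nat.Div0.mod_add, Nat.mod_small by auto. rewrite Hnth.
        destruct excluded_middle_informative as [_|Hn']; auto.
        exfalso; apply Hn', Ef_sub, Hef.
Qed.

Lemma hist_prefix A v s t n :
  play_hist A v s t n = (prefix A (play A v s t) n, play A v s t n).
Proof.
  induction n.
  - reflexivity.
  - unfold play at 2. simpl. rewrite IHn. f_equal.
    rewrite prefix_S. reflexivity.
Qed.

Lemma hist_eq_t A v s t n :
  play_hist A v s (mk A (play A v s t) t) n = play_hist A v s t n.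
Proof.
  induction n; auto. simpl. rewrite IHn. rewrite hist_prefix. f_equal.
  destruct own; auto. unfold mk. rewrite prefix_len, <- prefix_S.
  destruct list_eq_dec; [auto|congruence].
Qed.

Lemma hist_eq_s A v s t n :
  play_hist A v (mk A (play A v s t) s) t n = play_hist A v s t n.
Proof.
  induction n; auto. simpl. rewrite IHn. rewrite hist_prefix. f_equal.
  destruct own; auto. unfold mk. rewrite prefix_len, <- prefix_S.
  destruct list_eq_dec; [auto|congruence].
Qed.

Theorem lemma1 (A : arena) (v : V A) (s t : strategy A)
  (Hs : valid_strategy A Ex s) (Ht : valid_strategy A All t) :
  (fair A All (play A v s t) ->
     exists tbar, fair_strategy A All tbar /\
       forall n, play A v s t n = play A v s tbar n) /\
  (fair A Ex (play A v s t) ->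
     exists sbar, fair_strategy A Ex sbar /\
       forall n, play A v s t n = play A v sbar t n).
Proof.
  split; intros Hf.
  - exists (mk A (play A v s t) t). split. apply mk_fair; auto.
    intros n. unfold play at 2. rewrite hist_eq_t. reflexivity.
  - exists (mk A (play A v s t) s). split. apply mk_fair; auto.
    intros n. unfold play at 2. rewrite hist_eq_s. reflexivity.
Qed.
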